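(* Let $A'B'C'D'$ be a tangential quadrilateral in the $uv$-plane, lying in the upper half-plane $v>0$, such that the lines $A'B'$ and $C'D'$ meet at $O=(0,0)$ and the lines $B'C'$ and $D'A'$ meet at $P=(1,0)$, where $O$ lies on ray $A'B'$ beyond $B'$ and on ray $D'C'$ beyond $C'$, and $P$ lies on ray $A'D'$ beyond $D'$ and on ray $B'C'$ beyond $C'$ (so that $\angle A'+\angle B'<\pi$ and $\angle A'+\angle D'<\pi$). Then for every $a>1$ there exist real numbers $x,y,l$ with $x+y>0$ and $l>0$ such that, with $T$ the map defined below (for this $a$), $$T(x,y)=A',\quad T(x+l,y)=B',\quad T(x+l,y+l)=C',\quad T(x,y+l)=D'.$$
   Context: For fixed $a>1$, $T$ is the map defined on $\{(x,y):x+y\neq0\}$ by $T(x,y)=(f(x,y),g(x,y))$ with $$f(x,y)=\frac{a^x(a^{2y}-1)}{(a^x+a^y)(a^{x+y}-1)},\qquad g(x,y)=\frac{2a^{x+y}}{(a^x+a^y)(a^{x+y}-1)}.$$ A quadrilateral is tangential if it admits an inscribed circle tangent to all four sides; equivalently, the sums of the lengths of the two pairs of opposite sides are equal. Every tangential quadrilateral with no pair of parallel sides can be brought into the position described (lines of opposite sides meeting at $O$ and $P$ as specified, in the upper half-plane) by a similarity and a suitable labelling of its vertices. *)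

(* Defs.v *)
From Stdlib Require Import Reals.
Open Scope R_scope.

Definition point := (R * R)%type.

Definition apow (a t : R) : R := Rpower a t.

Definition fT (a x y : R) : R :=
  apow a x * (apow a (2 * y) - 1) / ((apow a x + apow a y) * (apow a (x + y) - 1)).

Definition gT (a x y : R) : R :=
  2 * apow a (x + y) / ((apow a x + apow a y) * (apow a (x + y) - 1)).

(* The map T (meaningful on x + y <> 0) *)
Definition T (a x y : R) : point := (fT a x y, gT a x y).

Definition dist (p q : point) : R :=
  sqrt ((fst p - fst q) ^ 2 + (snd p - snd q) ^ 2).

Definition beyond (X Y Z : point) : Prop :=
  exists t : R, 1 < t /\
    fst Z = fst X + t * (fst Y - fst X) /\ snd Z = snd X + t * (snd Y - snd X).

(* Tangential quadrilateral ABCD (sides AB, BC, CD, DA): Pitot condition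
   |AB| + |CD| = |BC| + |DA|, given as an equivalent definition in the paper. *)
Definition tangential (A B C D : point) : Prop :=
  dist A B + dist C D = dist B C + dist D A.

(* Main.v *)
Require Import Defs.
From Stdlib Require Import Reals Lra Psatz.
Open Scope R_scope.

Definition F (X Y : R) := X * (Y*Y - 1) / ((X + Y) * (X*Y - 1)).
Definition G (X Y : R) := 2 * (X*Y) / ((X + Y) * (X*Y - 1)).
Definition rr (z1 z2 : R) := sqrt (z1^2 + z2^2).
Definition qq (z1 z2 : R) := sqrt ((1-z1)^2 + z2^2).
Definition Yo (z1 z2 : R) := (z1 + rr z1 z2) / z2.
Definition Xp (z1 z2 : R) := (1 - z1 + qq z1 z2) / z2.

Lemma ln_pos x : 1 < x -> 0 < ln x.
Proof. intro; rewrite <- ln_1; apply ln_increasing; lra. Qed.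

Lemma T_FG a x y : T a x y = (F (apow a x) (apow a y), G (apow a x) (apow a y)).
Proof. unfold T, fT, gT, F, G, apow. replace (2*y) with (y+y) by ring.
  rewrite !Rpower_plus. reflexivity. Qed.

Lemma apow_log a X : 1 < a -> 0 < X -> apow a (ln X / ln a) = X.
Proof. intros Ha HX. unfold apow, Rpower. pose proof (ln_pos a Ha).
  replace (ln X / ln a * ln a) with (ln X) by (field; lra). apply exp_ln; auto. Qed.

Lemma apow_plus a u v : apow a (u+v) = apow a u * apow a v.
Proof. apply Rpower_plus. Qed.

Lemma sqrt_scale k u v : 0 <= k -> sqrt ((k*u)^2 + (k*v)^2) = k * sqrt (u^2+v^2).
Proof. intro. replace ((k*u)^2 + (k*v)^2) with ((k*k) * (u^2+v^2)) by ring.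
  rewrite sqrt_mult; [rewrite sqrt_square; auto | nra | nra]. Qed.

Lemma rr_props z1 z2 : 0 < z2 -> rr z1 z2 * rr z1 z2 = z1^2 + z2^2 /\ 0 <= rr z1 z2
  /\ z1 < rr z1 z2 /\ - z1 < rr z1 z2.
Proof. intro. unfold rr. 
  set (r := sqrt _). assert (0 <= r) by apply sqrt_pos. assert (r*r = z1^2+z2^2) by (unfold r; apply sqrt_sqrt; apply Rplus_le_le_0_compat; apply pow2_ge_0). clearbody r.
  repeat split; auto; nra. Qed.

Lemma qq_props z1 z2 : 0 < z2 -> qq z1 z2 * qq z1 z2 = (1-z1)^2 + z2^2 /\ 0 <= qq z1 z2
  /\ 1 - z1 < qq z1 z2 /\ - (1 - z1) < qq z1 z2.
Proof. intro. unfold qq. 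
  set (r := sqrt _). assert (0 <= r) by apply sqrt_pos. assert (r*r = (1-z1)^2+z2^2) by (unfold r; apply sqrt_sqrt; apply Rplus_le_le_0_compat; apply pow2_ge_0). clearbody r.
  repeat split; auto; nra. Qed.

Lemma div_eq n d c : d <> 0 -> n = c * d -> n / d = c.
Proof. intros. subst. field. auto. Qed.

Lemma point_facts z1 z2 : 0 < z2 ->
  let X := Xp z1 z2 in let Y := Yo z1 z2 in
  0 < X /\ 0 < Y /\ 1 < X * Y /\ F X Y = z1 /\ G X Y = z2 /\
  rr z1 z2 = X * (Y*Y+1) / ((X+Y)*(X*Y-1)) /\
  qq z1 z2 = Y * (X*X+1) / ((X+Y)*(X*Y-1)).
Proof.
  intros Hz X Y.
  destruct (rr_props z1 z2 Hz) as [Hr2 [Hr0 [Hr1 Hr1']]].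
  destruct (qq_props z1 z2 Hz) as [Hq2 [Hq0 [Hq1 Hq1']]].
  assert (HY : Y * z2 = z1 + rr z1 z2) by (unfold Y, Yo; field; lra).
  assert (HX : X * z2 = 1 - z1 + qq z1 z2) by (unfold X, Xp; field; lra).
  clearbody X Y.
  set (r := rr z1 z2) in *. set (q := qq z1 z2) in *. clearbody r q.
  assert (HY' : Y * (r - z1) = z2).
  { apply (Rmult_eq_reg_r z2); [|lra].
    replace (Y * (r - z1) * z2) with ((Y*z2) * (r - z1)) by ring. rewrite HY. nra. }
  assert (HX' : X * (q - (1 - z1)) = z2).
  { apply (Rmult_eq_reg_r z2); [|lra].
    replace (X * (q - (1-z1)) * z2) with ((X*z2) * (q - (1-z1))) by ring. rewrite HX. nra. }
  assert (Y0 : 0 < Y) by nra.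
  assert (X0 : 0 < X) by nra.
  assert (Hrq : r < 1 + q) by nra.
  assert (HXY : 1 < X * Y).
  { assert (H : (X*z2)*(Y*z2) > z2*z2).
    { rewrite HX, HY. nra. }
    nra. }
  assert (HYY : Y*(Y*z2) = Y*(z1+r)) by (rewrite HY; ring).
  assert (HXX : X*(X*z2) = X*(1-z1+q)) by (rewrite HX; ring).
  assert (e1 : z2*(Y*Y-1) = 2*z1*Y) by lra.
  assert (e2 : z2*(X*X-1) = 2*(1-z1)*X) by lra.
  assert (HXe1 : X*(z2*(Y*Y-1)) = X*(2*z1*Y)) by (rewrite e1; ring).
  assert (HYe2 : Y*(z2*(X*X-1)) = Y*(2*(1-z1)*X)) by (rewrite e2; ring).
  assert (Hden : z2*((X+Y)*(X*Y-1)) = 2*X*Y) by lra.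
  assert (Dn : (X+Y)*(X*Y-1) <> 0) by nra.
  assert (Hr : 2*Y*r = z2*(Y*Y+1)) by lra.
  assert (Hq : 2*X*q = z2*(X*X+1)) by lra.
  assert (Hden1 : z1*(z2*((X+Y)*(X*Y-1))) = z1*(2*X*Y)) by (rewrite Hden; ring).
  assert (Hden2 : X*(Y*Y+1)*(z2*((X+Y)*(X*Y-1))) = X*(Y*Y+1)*(2*X*Y)) by (rewrite Hden; ring).
  assert (Hden3 : Y*(X*X+1)*(z2*((X+Y)*(X*Y-1))) = Y*(X*X+1)*(2*X*Y)) by (rewrite Hden; ring).
  repeat split; auto.
  - unfold F. apply div_eq; auto. apply (Rmult_eq_reg_l z2); [|lra]. lra.
  - unfold G. apply div_eq; auto. lra.
  - symmetry. apply div_eq; auto. apply (Rmult_eq_reg_l (z2*(2*Y))); [|nra].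
    assert (Hr3 : (z2 * (2*Y)) * (r * ((X + Y) * (X * Y - 1))) = (2*Y*r)*(z2*((X + Y) * (X * Y - 1)))) by ring.
    rewrite Hr3, Hden, Hr. ring.
  - symmetry. apply div_eq; auto. apply (Rmult_eq_reg_l (z2*(2*X))); [|nra].
    assert (Hq3 : (z2 * (2*X)) * (q * ((X + Y) * (X * Y - 1))) = (2*X*q)*(z2*((X + Y) * (X * Y - 1)))) by ring.
    rewrite Hq3, Hden, Hq. ring.
Qed.

Lemma beyondO z1 z2 w1 w2 : beyond (z1,z2) (w1,w2) (0,0) ->
  exists s, 0 < s < 1 /\ w1 = s*z1 /\ w2 = s*z2.
Proof. intros [t [Ht [H1 H2]]]; simpl in *. exists ((t-1)/t).
  assert (0 < /t) by (apply Rinv_0_lt_compat; lra).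
  replace ((t-1)/t) with (1 - /t) by (field; lra).
  assert (Ht1 : /t * t = 1) by (field; lra).
  repeat split; try nra.
  - apply (Rmult_eq_reg_l t); [|lra]. replace (t*((1-/t)*z1)) with (t*z1 - (/t*t)*z1) by ring. rewrite Ht1. lra.
  - apply (Rmult_eq_reg_l t); [|lra]. replace (t*((1-/t)*z2)) with (t*z2 - (/t*t)*z2) by ring. rewrite Ht1. lra.
Qed.

Lemma beyondP z1 z2 w1 w2 : beyond (z1,z2) (w1,w2) (1,0) ->
  exists s, 0 < s < 1 /\ w1 = 1 + s*(z1-1) /\ w2 = s*z2.
Proof. intros [t [Ht [H1 H2]]]; simpl in *. exists ((t-1)/t).
  assert (0 < /t) by (apply Rinv_0_lt_compat; lra).
  replace ((t-1)/t) with (1 - /t) by (field; lra).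
  assert (Ht1 : /t * t = 1) by (field; lra).
  repeat split; try nra.
  - apply (Rmult_eq_reg_l t); [|lra]. replace (t*(1 + (1-/t)*(z1-1))) with (t + t*(z1 - 1) - (/t*t)*(z1-1)) by ring. rewrite Ht1. lra.
  - apply (Rmult_eq_reg_l t); [|lra]. replace (t*((1-/t)*z2)) with (t*z2 - (/t*t)*z2) by ring. rewrite Ht1. lra.
Qed.

Lemma rr_scale s z1 z2 : 0 <= s -> rr (s*z1) (s*z2) = s * rr z1 z2.
Proof. intro. unfold rr. apply sqrt_scale; auto. Qed.

Lemma qq_scale s z1 z2 : 0 <= s -> qq (1 + s*(z1-1)) (s*z2) = s * qq z1 z2.
Proof. intro. unfold qq. replace (1 - (1 + s*(z1-1))) with (s*(1-z1)) by ring. apply sqrt_scale; auto. Qed.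

Lemma Yo_scale s z1 z2 : 0 < s -> 0 < z2 -> Yo (s*z1) (s*z2) = Yo z1 z2.
Proof. intros. unfold Yo. rewrite rr_scale by lra. field. lra. Qed.

Lemma Xp_scale s z1 z2 : 0 < s -> 0 < z2 -> Xp (1 + s*(z1-1)) (s*z2) = Xp z1 z2.
Proof. intros. unfold Xp. rewrite qq_scale by lra. field. lra. Qed.

Lemma Xp_mono s z1 z2 : 0 < s < 1 -> 0 < z2 -> Xp z1 z2 < Xp (s*z1) (s*z2).
Proof. intros Hs Hz. assert (Hsz : 0 < s*z2) by nra.
  destruct (qq_props z1 z2 Hz) as [Hq2 [Hq0 [Hq1 Hq1']]].
  destruct (qq_props (s*z1) (s*z2) Hsz) as [Hs2 [Hs0 [Hs1 Hs1']]].
  unfold Xp. set (q := qq z1 z2) in *. set (qs := qq (s*z1) (s*z2)) in *. clearbody q qs.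
  assert (Hsq : (s*q)^2 < (qs + 1 - s)^2) by nra.
  assert (Hlt : s*q < qs + 1 - s) by nra.
  assert (E : (1 - s*z1 + qs)/(s*z2) - (1 - z1 + q)/z2 = ((1 - s*z1 + qs) - s*(1-z1+q))/(s*z2)) by (field; lra).
  assert (0 < ((1 - s*z1 + qs) - s*(1-z1+q))/(s*z2)) by (apply Rdiv_lt_0_compat; lra).
  lra.
Qed.

Theorem theorem6p2 (A B C D : point) :
  tangential A B C D ->
  0 < snd A -> 0 < snd B -> 0 < snd C -> 0 < snd D ->
  beyond A B (0, 0) -> beyond D C (0, 0) ->
  beyond A D (1, 0) -> beyond B C (1, 0) ->
  forall a : R, 1 < a ->
  exists x y l : R, 0 < x + y /\ 0 < l /\
    T a x y = A /\ T a (x + l) y = B /\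
    T a (x + l) (y + l) = C /\ T a x (y + l) = D.
Proof.
  intros Htan Ha2 Hb2 Hc2 Hd2 HAB HDC HAD HBC aa Haa.
  destruct A as [a1 a2], B as [b1 b2], C as [c1 c2], D as [d1 d2].
  simpl in Ha2, Hb2, Hc2, Hd2.
  destruct (beyondO _ _ _ _ HAB) as [s1 [Hs1 [Hb1 Hb2']]].
  destruct (beyondO _ _ _ _ HDC) as [s2 [Hs2 [Hc1 Hc2']]].
  destruct (beyondP _ _ _ _ HAD) as [s3 [Hs3 [Hd1 Hd2']]].
  destruct (beyondP _ _ _ _ HBC) as [s4 [Hs4 [Hc1' Hc2'']]].
  assert (HYb : Yo b1 b2 = Yo a1 a2) by (rewrite Hb1, Hb2'; apply Yo_scale; lra).
  assert (HXd : Xp d1 d2 = Xp a1 a2) by (rewrite Hd1, Hd2'; apply Xp_scale; lra).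
  assert (HYc : Yo c1 c2 = Yo d1 d2) by (rewrite Hc1, Hc2'; apply Yo_scale; lra).
  assert (HXc : Xp c1 c2 = Xp b1 b2) by (rewrite Hc1', Hc2''; apply Xp_scale; lra).
  assert (Hmono : Xp a1 a2 < Xp b1 b2) by (rewrite Hb1, Hb2'; apply Xp_mono; lra).
  assert (dAB : Defs.dist (a1,a2) (b1,b2) = rr a1 a2 - rr b1 b2).
  { unfold Defs.dist; cbn [fst snd]. rewrite Hb1, Hb2', rr_scale by lra.
    replace ((a1 - s1*a1)^2 + (a2 - s1*a2)^2) with (((1-s1)*a1)^2 + ((1-s1)*a2)^2) by ring.
    rewrite sqrt_scale by lra. unfold rr. ring. }
  assert (dCD : Defs.dist (c1,c2) (d1,d2) = rr d1 d2 - rr c1 c2).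
  { unfold Defs.dist; cbn [fst snd]. rewrite Hc1, Hc2', rr_scale by lra.
    replace ((s2*d1 - d1)^2 + (s2*d2 - d2)^2) with (((1-s2)*d1)^2 + ((1-s2)*d2)^2) by ring.
    rewrite sqrt_scale by lra. unfold rr. ring. }
  assert (dBC : Defs.dist (b1,b2) (c1,c2) = qq b1 b2 - qq c1 c2).
  { unfold Defs.dist; cbn [fst snd]. rewrite Hc1', Hc2'', qq_scale by lra.
    replace ((b1 - (1 + s4*(b1-1)))^2 + (b2 - s4*b2)^2) with (((1-s4)*(1-b1))^2 + ((1-s4)*b2)^2) by ring.
    rewrite sqrt_scale by lra. unfold qq. ring. }
  assert (dDA : Defs.dist (d1,d2) (a1,a2) = qq a1 a2 - qq d1 d2).
  { unfold Defs.dist; cbn [fst snd]. rewrite Hd1, Hd2', qq_scale by lra.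
    replace ((1 + s3*(a1-1) - a1)^2 + (s3*a2 - a2)^2) with (((1-s3)*(1-a1))^2 + ((1-s3)*a2)^2) by ring.
    rewrite sqrt_scale by lra. unfold qq. ring. }
  pose proof (point_facts a1 a2 Ha2) as PA; cbv zeta in PA.
  destruct PA as [Xa [Ya [XYa [Fa [Ga [Ra Qa]]]]]].
  pose proof (point_facts b1 b2 Hb2) as PB; cbv zeta in PB.
  destruct PB as [Xb [Yb [XYb [Fb [Gb [Rb Qb]]]]]].
  pose proof (point_facts c1 c2 Hc2) as PC; cbv zeta in PC.
  destruct PC as [Xc [Yc [XYc [Fc [Gc [Rc Qc]]]]]].
  pose proof (point_facts d1 d2 Hd2) as PD; cbv zeta in PD.
  destruct PD as [Xd [Yd [XYd [Fd [Gd [Rd Qd]]]]]].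
  unfold tangential in Htan. rewrite dAB, dCD, dBC, dDA, Ra, Rb, Rc, Rd, Qa, Qb, Qc, Qd in Htan.
  rewrite HYb, HXd, HYc, HXc in *.
  clear dAB dCD dBC dDA Ra Rb Rc Rd Qa Qb Qc Qd HYb HXd HYc HXc.
  set (X1 := Xp a1 a2) in *. set (Y1 := Yo a1 a2) in *.
  set (X2 := Xp b1 b2) in *. set (Y2 := Yo d1 d2) in *.
  clearbody X1 Y1 X2 Y2.
  assert (Hkey : X2*Y1 = X1*Y2).
  { assert (K : (X1 * (Y1 * Y1 + 1) / ((X1 + Y1) * (X1 * Y1 - 1)) - X2 * (Y1 * Y1 + 1) / ((X2 + Y1) * (X2 * Y1 - 1))
        + (X1 * (Y2 * Y2 + 1) / ((X1 + Y2) * (X1 * Y2 - 1)) - X2 * (Y2 * Y2 + 1) / ((X2 + Y2) * (X2 * Y2 - 1))))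
       - (Y1 * (X2 * X2 + 1) / ((X2 + Y1) * (X2 * Y1 - 1)) - Y2 * (X2 * X2 + 1) / ((X2 + Y2) * (X2 * Y2 - 1))
        + (Y1 * (X1 * X1 + 1) / ((X1 + Y1) * (X1 * Y1 - 1)) - Y2 * (X1 * X1 + 1) / ((X1 + Y2) * (X1 * Y2 - 1))))
       = 2*(X2*Y1 - X1*Y2)*(1/((X1+Y1)*(X2+Y2)) + 1/((X1*Y2-1)*(X2*Y1-1)))).
    { field. repeat split; nra. }
    rewrite Htan, Rminus_diag in K.
    assert (P1 : 0 < 1/((X1+Y1)*(X2+Y2))) by (apply Rdiv_lt_0_compat; nra).
    assert (P2 : 0 < 1/((X1*Y2-1)*(X2*Y1-1))) by (apply Rdiv_lt_0_compat; nra).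
    nra. }
  set (m := X2 / X1).
  assert (Hm : 1 < m) by (unfold m; apply (Rmult_lt_reg_r X1); [lra|]; field_simplify; lra).
  assert (HX2 : X1 * m = X2) by (unfold m; field; lra).
  assert (HY2 : Y1 * m = Y2) by (unfold m; apply (Rmult_eq_reg_r X1); [|lra]; field_simplify; lra).
  pose proof (ln_pos aa Haa) as Hla.
  exists (ln X1 / ln aa), (ln Y1 / ln aa), (ln m / ln aa).
  assert (E1 : apow aa (ln X1 / ln aa) = X1) by (apply apow_log; lra).
  assert (E2 : apow aa (ln Y1 / ln aa) = Y1) by (apply apow_log; lra).
  assert (E3 : apow aa (ln m / ln aa) = m) by (apply apow_log; lra).
  repeat split.
  - replace (ln X1 / ln aa + ln Y1 / ln aa) with (ln (X1*Y1) / ln aa)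
      by (rewrite ln_mult by lra; field; lra).
    apply Rdiv_lt_0_compat; [apply ln_pos|]; lra.
  - apply Rdiv_lt_0_compat; [apply ln_pos|]; lra.
  - rewrite T_FG, E1, E2, Fa, Ga. reflexivity.
  - rewrite T_FG, apow_plus, E1, E2, E3, HX2, Fb, Gb. reflexivity.
  - rewrite T_FG, !apow_plus, E1, E2, E3, HX2, HY2, Fc, Gc. reflexivity.
  - rewrite T_FG, apow_plus, E1, E2, E3, HY2, Fd, Gd. reflexivity.
Qed.
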